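(* Let $x\in\mathrm{dom}(\mathcal R)$ satisfy $\mathcal R(x)=\inf\{\mathcal R(z):z\in\mathbb X,Az=Ax\}$, let $x_\alpha\in R_\alpha(Ax)$, $\alpha>0$, be any selection, and let $\phi\in\Phi$. The following are equivalent: (i) $\mathcal F(\sigma_x)\le\phi$ pointwise on $[0,\infty)$; (ii) $\sigma_x(\alpha)\le\sup_{t\ge0}\big(\phi(t)-\frac t{2\alpha}\big)$ for all $\alpha>0$; (iii) $\mathcal R(x)-\mathcal R(z)\le\phi(\|Ax-Az\|^2_{\mathbb Y})$ for all $z\in\mathbb X$. In particular, $\mathcal R(x)-\mathcal R(z)\le(\mathcal F(\sigma_x))(\|Ax-Az\|_{\mathbb Y}^2)$ for all $z\in\mathbb X$.
   Context: Standing setting: $\mathbb X$ real Banach space, $\tau$ a topology with $(\mathbb X,\tau)$ locally convex Hausdorff; $\mathcal R:\mathbb X\to(-\infty,\infty]$ proper convex with $\tau$-compact sublevel sets; $\mathbb Y$ real Hilbert space; $A:\mathbb X\to\mathbb Y$ linear, $\tau$-to-weak continuous. $T_\alpha(x,g):=\frac1{2\alpha}\|g-Ax\|_{\mathbb Y}^2+\mathcal R(x)$, $R_\alpha(g):=\operatorname{argmin}_{x\in\mathrm{dom}(\mathcal R)}T_\alpha(x,g)$. Defect: $\sigma_x(\alpha):=T_\alpha(x,Ax)-T_\alpha(x_\alpha,Ax)$ for $\alpha>0$. $\Phi$ is the set of concave upper semicontinuous functions $\phi:[0,\infty)\to[0,\infty)$. For a function $\sigma:(0,\infty)\to[0,\infty]$,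 $\mathcal F(\sigma):[0,\infty)\to[-\infty,\infty)$ is defined by $(\mathcal F(\sigma))(t):=\inf_{\alpha>0}\big(\sigma(\alpha)+\frac t{2\alpha}\big)$. *)

(* Defs.v *)
From HB Require Import structures.
From mathcomp Require Import all_boot all_order all_algebra.
From mathcomp Require Import all_classical all_reals all_analysis.
Set Implicit Arguments. Unset Strict Implicit. Unset Printing Implicit Defensive.
Import Order.TTheory GRing.Theory Num.Theory.
Import numFieldNormedType.Exports.
Local Open Scope classical_set_scope.
Local Open Scope ring_scope.

(* Y is a real Hilbert space: a complete normed space whose norm comes from
   the (symmetric, bilinear) inner product [inner]. *)
Definition is_inner_product (R : realType) (Y : normedModType R)
    (inner : Y -> Y -> R) : Prop :=
  [/\ (forall y z, inner y z = inner z y),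
      (forall y1 y2 z, inner (y1 + y2) z = inner y1 z + inner y2 z),
      (forall (a : R) y z, inner (a *: y) z = a * inner y z) &
      (forall y, `|y| ^+ 2 = inner y y)].

Definition proper_convex (R : realType) (X : lmodType R)
    (Reg : X -> \bar R) : Prop :=
  [/\ (forall x, Reg x != -oo%E),
      (exists x, (Reg x < +oo)%E) &
      (forall x y (l : R), 0 <= l -> l <= 1 ->
         (Reg (l *: x + (1 - l) *: y)%R <= l%:E * Reg x + (1 - l)%:E * Reg y)%E)].

Definition dom (R : realType) (X : Type) (Reg : X -> \bar R) : set X :=
  [set x | (Reg x < +oo)%E].

Definition Tfun (R : realType) (X Y : normedModType R) (A : X -> Y)
    (Reg : X -> \bar R) (alpha : R) (x : X) (g : Y) : \bar R :=
  ((`|g - A x| ^+ 2 / (2 * alpha))%:E + Reg x)%E.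

Definition Ralpha (R : realType) (X Y : normedModType R) (A : X -> Y)
    (Reg : X -> \bar R) (alpha : R) (g : Y) : set X :=
  [set x | dom Reg x /\
     forall z, dom Reg z -> (Tfun A Reg alpha x g <= Tfun A Reg alpha z g)%E].

Definition defect (R : realType) (X Y : normedModType R) (A : X -> Y)
    (Reg : X -> \bar R) (x : X) (xa : R -> X) (alpha : R) : \bar R :=
  (Tfun A Reg alpha x (A x) - Tfun A Reg alpha (xa alpha) (A x))%E.

Definition Ftrans (R : realType) (sigma : R -> \bar R) (t : R) : \bar R :=
  ereal_inf [set (sigma alpha + (t / (2 * alpha))%:E)%E
            | alpha in [set a : R | 0 < a]].

(* Phi: concave upper semicontinuous functions [0,oo) -> [0,oo);
   only the values on [0,oo) matter. *)
Definition in_Phi (R : realType) (phi : R -> R) : Prop :=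
  [/\ (forall t, 0 <= t -> 0 <= phi t),
      (forall s t (l : R), 0 <= s -> 0 <= t -> 0 <= l -> l <= 1 ->
          l * phi s + (1 - l) * phi t <= phi (l * s + (1 - l) * t)) &
      (forall t, 0 <= t -> forall e : R, 0 < e -> exists2 d : R, 0 < d &
          forall s, 0 <= s -> `|s - t| < d -> phi s < phi t + e)].

(* Main.v *)
Require Import Defs.
From HB Require Import structures.
From mathcomp Require Import all_boot all_order all_algebra.
From mathcomp Require Import all_classical all_reals all_analysis.
Import Order.TTheory GRing.Theory Num.Theory.
Import numFieldNormedType.Exports.
Local Open Scope classical_set_scope.
Local Open Scope ring_scope.

From mathcomp Require Import ring lra.

Lemma conc3 (R : realType) (phi : R -> R) : in_Phi phi ->
  forall a b c : R, 0 <= a -> a <= b -> b <= c ->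
  (c - b) * phi a + (b - a) * phi c <= (c - a) * phi b.
Proof.
case=> _ hc _ a b c a0 ab bc.
have [ac|ac] := eqVneq a c.
  have ba : b = a by apply/eqP; rewrite eq_le ab; rewrite ac bc.
  by subst; rewrite !subrr !mul0r addr0.
have ca0 : 0 < c - a by rewrite subr_gt0 lt_neqAle ac (le_trans ab bc).
pose l := (c - b) / (c - a).
have l0 : 0 <= l by apply: divr_ge0; lra.
have l1 : l <= 1 by rewrite ler_pdivrMr // mul1r; lra.
have := hc a c l a0 (le_trans a0 (le_trans ab bc)) l0 l1.
have -> : l * a + (1 - l) * c = b.
  rewrite /l; field; lra.
have e1 : 1 - l = (b - a) / (c - a) by rewrite /l; field; lra.
rewrite e1 /l => H.
have -> : (c - b) * phi a + (b - a) * phi c =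
  (c - a) * ((c - b) / (c - a) * phi a + (b - a) / (c - a) * phi c).
  by field; lra.
by rewrite ler_pM2l.
Qed.

Lemma biconj (R : realType) (phi : R -> R) : in_Phi phi ->
  forall t e : R, 0 <= t -> 0 < e ->
  exists2 b : R, 0 < b & forall s, 0 <= s -> phi s + b * (t - s) <= phi t + e.
Proof.
move=> hP t e t0 e0.
have [p0 _ husc] := hP.
have [d d0 hd] := husc t t0 e e0.
pose h := d / 2; pose u := t + h.
have h0 : 0 < h by rewrite /h; lra.
pose m := (phi u - phi t) / h.
have mh : m * h = phi u - phi t by rewrite /m divfK // gt_eqF.
have right s : u <= s -> phi s - phi t <= m * (s - t).
  move=> us.
  have tu : t <= u by rewrite /u; lra.
  have H := @conc3 _ _ hP _ _ _ t0 tu us.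
  rewrite -(ler_pM2l h0).
  rewrite /u in H us; nra.
have m0 : 0 <= m.
  rewrite leNgt; apply/negP => mlt.
  pose K := h + (phi t + 1) / (- m).
  have Km : K * m = h * m - (phi t + 1) by rewrite /K; field; lra.
  have K0 : h <= K.
    rewrite /K lerDl; apply: divr_ge0; [have := p0 t t0; lra | lra].
  have := right (t + K) ltac:(rewrite /u; lra).
  have := p0 (t + K) ltac:(lra).
  nra.
exists (m + e / (t + 1)).
  have : 0 < e / (t + 1) by apply: divr_gt0; lra.
  lra.
have et : e / (t + 1) * t <= e.
  rewrite mulrC mulrA ler_pdivrMr; last lra.
  nra.
have et0 : 0 < e / (t + 1) by apply: divr_gt0; lra.
move=> s s0.
have [st|ts] := leP s t.
  have tu : t <= u by rewrite /u; lra.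
  have H := @conc3 _ _ hP _ _ _ s0 st tu.
  have : h * (phi s + m * (t - s)) <= h * phi t.
    rewrite /u in H; nra.
  rewrite ler_pM2l // => H2.
  nra.
have [su|us] := ltP s u.
  have := hd s s0 ltac:(rewrite ger0_norm /u /h in su *; lra).
  nra.
have := right s us.
nra.
Qed.

Theorem lemma5p5
  (R : realType)
  (* X: real Banach space *)
  (X : completeNormedModType R)
  (* (X, tau) locally convex Hausdorff: Xt carries tau, iota : Xt -> X the
     (linear, bijective) identity map of the underlying vector space *)
  (Xt : tvsType R) (iota : {linear Xt -> X})
  (iota_bij : bijective iota) (Xt_hausdorff : hausdorff_space Xt)
  (* regularizer: proper convex, tau-compact sublevel sets *)
  (Reg : X -> \bar R) (Reg_pc : proper_convex Reg)
  (Reg_sub : forall c : R, compact (iota @^-1` [set x | (Reg x <= c%:E)%E]))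
  (* Y: real Hilbert space *)
  (Y : completeNormedModType R) (inner : Y -> Y -> R)
  (inner_ok : is_inner_product inner)
  (* A linear, tau-to-weak continuous *)
  (A : {linear X -> Y})
  (A_cont : forall y : Y, continuous (fun u : Xt => inner (A (iota u)) y))
  (* the point x *)
  (x : X) (x_dom : dom Reg x)
  (x_min : Reg x = ereal_inf [set Reg z | z in [set z | A z = A x]])
  (* a selection x_alpha in R_alpha(Ax) *)
  (xa : R -> X) (xa_sel : forall alpha : R, 0 < alpha -> Ralpha A Reg alpha (A x) (xa alpha))
  (phi : R -> R) (phi_Phi : in_Phi phi) :
  let sigma := defect A Reg x xa in
  ((forall t : R, 0 <= t -> (Ftrans sigma t <= (phi t)%:E)%E)
   <->
   (forall alpha : R, 0 < alpha ->
      (sigma alpha <= ereal_sup [set EFin (phi t - t / (2 * alpha))%R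
                                | t in [set t : R | (0 <= t)%R]])%E))
  /\
  ((forall alpha : R, 0 < alpha ->
      (sigma alpha <= ereal_sup [set EFin (phi t - t / (2 * alpha))%R
                                | t in [set t : R | (0 <= t)%R]])%E)
   <->
   (forall z : X, (Reg x - Reg z <= (phi (`|A x - A z| ^+ 2)%R)%:E)%E))
  /\
  (forall z : X, (Reg x - Reg z <= Ftrans sigma (`|A x - A z| ^+ 2)%R)%E).
Proof.
move=> sigma.
have [Rninf _ _] := Reg_pc.
have [rx Rx] : exists rx, Reg x = rx%:E.
  move: x_dom (Rninf x); rewrite /dom /=.
  by case: (Reg x) => // r _ _; exists r.
have K2 : forall alpha, 0 < alpha -> exists ra, Reg (xa alpha) = ra%:E /\
   sigma alpha = (rx - (`|A x - A (xa alpha)| ^+ 2 / (2 * alpha) + ra))%:E.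
  move=> a a0; have [dxa _] := xa_sel a a0.
  move: dxa (Rninf (xa a)); rewrite /dom /= => dxa.
  case E: (Reg (xa a)) dxa => [ra| |] // _ _; exists ra; split => //.
  rewrite /sigma /defect /Tfun Rx E subrr normr0 expr0n /= mul0r add0r.
  by rewrite -EFinD.
have K1 : forall alpha, 0 < alpha -> forall z rz, Reg z = rz%:E ->
   exists sa, sigma alpha = sa%:E /\
     rx - rz <= sa + `|A x - A z| ^+ 2 / (2 * alpha).
  move=> a a0 z rz Rz.
  have [ra [Ra ->]] := K2 a a0.
  eexists; split; first reflexivity.
  have [_ /(_ z)] := xa_sel a a0.
  rewrite /dom /Tfun /= Ra Rz ltry => /(_ isT).
  rewrite -!EFinD lee_fin => H.
  lra.
have P3 : forall z : X, (Reg x - Reg z <= Ftrans sigma (`|A x - A z| ^+ 2)%R)%E.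
  move=> z; case Rz: (Reg z) => [rz| |]; last by have := Rninf z; rewrite Rz.
    apply/ereal_infP => _ [a /= a0 <-].
    have [sa [-> H]] := K1 a a0 z rz Rz.
    by rewrite Rx -!EFinD lee_fin.
  by rewrite Rx /= leNye.
have i_iii : (forall t : R, 0 <= t -> (Ftrans sigma t <= (phi t)%:E)%E) ->
   (forall z : X, (Reg x - Reg z <= (phi (`|A x - A z| ^+ 2)%R)%:E)%E).
  move=> H z; apply: le_trans (P3 z) _; apply: H.
  exact: sqr_ge0.
have iii_ii : (forall z : X, (Reg x - Reg z <= (phi (`|A x - A z| ^+ 2)%R)%:E)%E) ->
   (forall alpha : R, 0 < alpha ->
      (sigma alpha <= ereal_sup [set EFin (phi t - t / (2 * alpha))%R
                                | t in [set t : R | (0 <= t)%R]])%E).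
  move=> H a a0.
  have [ra [Ra ->]] := K2 a a0.
  apply: le_trans (ereal_sup_ubound _); last first.
    exists (`|A x - A (xa a)| ^+ 2) => //; exact: sqr_ge0.
  have := H (xa a); rewrite Rx Ra -EFinB !lee_fin; lra.
have key : (forall alpha : R, 0 < alpha ->
      (sigma alpha <= ereal_sup [set EFin (phi t - t / (2 * alpha))%R
                                | t in [set t : R | (0 <= t)%R]])%E) ->
   forall t e, 0 <= t -> 0 < e -> exists2 a, 0 < a &
     exists sa, sigma a = sa%:E /\ sa + t / (2 * a) <= phi t + e.
  move=> H t e t0 e0.
  have [b b0 hb] := @biconj _ _ phi_Phi _ _ t0 e0.
  have a0 : 0 < (2 * b)^-1 by rewrite invr_gt0; lra.
  exists (2 * b)^-1 => //.
  have [ra [_ Es]] := K2 _ a0.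
  eexists; split; first exact: Es.
  have hs : forall s : R, s / (2 * (2 * b)^-1) = b * s.
    by move=> s; field; rewrite gt_eqF.
  have Hs := H _ a0; rewrite Es in Hs.
  move: Hs; set S := ereal_sup _ => Hs.
  have Hsup : (S <= (phi t + e - b * t)%:E)%E.
    apply: ge_ereal_sup => _ [s /= s0 <-].
    rewrite hs lee_fin; have := hb s s0; lra.
  have := le_trans Hs Hsup; rewrite lee_fin hs; lra.
have ii_i : (forall alpha : R, 0 < alpha ->
      (sigma alpha <= ereal_sup [set EFin (phi t - t / (2 * alpha))%R
                                | t in [set t : R | (0 <= t)%R]])%E) ->
   (forall t : R, 0 <= t -> (Ftrans sigma t <= (phi t)%:E)%E).
  move=> H t t0; apply/lee_addgt0Pr => e e0.
  have [a a0 [sa [Es Hs]]] := key H t e t0 e0.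
  apply: (@le_trans _ _ (sigma a + (t / (2 * a))%:E)%E).
    by apply: ereal_inf_lbound; exists a.
  by rewrite Es -EFinD -EFinD lee_fin.
have ii_iii : (forall alpha : R, 0 < alpha ->
      (sigma alpha <= ereal_sup [set EFin (phi t - t / (2 * alpha))%R
                                | t in [set t : R | (0 <= t)%R]])%E) ->
   (forall z : X, (Reg x - Reg z <= (phi (`|A x - A z| ^+ 2)%R)%:E)%E).
  by move=> H; apply: i_iii; apply: ii_i.
split; [split|split; [split|]] => //.
- by move=> H; apply: iii_ii; apply: i_iii.
Qed.
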